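(* Fix $p\in[1,\infty]$ and write $\|\cdot\|$ for the $\ell_p$ norm on vectors and the induced $\ell_p\to\ell_p$ operator norm on matrices. Let $f:\mathbb{R}^{n_0}\to\mathbb{R}^{n_L}$ be the $L$-layer network defined by $a^{(0)}(x)=x$, $z^{(l)}(x)=W^{(l)}a^{(l-1)}(x)$ and $a^{(l)}(x)=\sigma^{(l)}(z^{(l)}(x))$ for $l=1,\dots,L-1$, and $f(x)=z^{(L)}(x)=W^{(L)}a^{(L-1)}(x)$, where $W^{(l)}\in\mathbb{R}^{n_l\times n_{l-1}}$ and $\sigma^{(l)}(z)=(\sigma^{(l)}_1(z_1),\dots,\sigma^{(l)}_{n_l}(z_{n_l}))$. Suppose each $\sigma^{(l)}_i$ is slope-restricted in $[\alpha^{(l)}_i,\beta^{(l)}_i]$ with $0\le\alpha^{(l)}_i\le\beta^{(l)}_i<\infty$. For $l=1,\dots,L-1$ let $d^{(l)}\in\mathbb{R}^{n_l}$ satisfy $0\le d^{(l)}_i\le\frac{\alpha^{(l)}_i+\beta^{(l)}_i}{2}$ for all $i$, and set $D^{(l)}=\mathrm{diag}(d^{(l)})$ and $D'^{(l)}=\mathrm{diag}(\beta^{(l)}-d^{(l)})$; set $D'^{(L)}=I$. Define $y^{(l)}(x)=D'^{(l)}z^{(l)}(x)$ for $l=1,\dots,L$. Define $m^{(1)}=\|D'^{(1)}W^{(1)}\|$ and, for $l=2,\dots,L$, $$m^{(l)}=\Big\|D'^{(l)}W^{(l)}\prod_{i=1}^{l-1}D^{(i)}W^{(i)}\Big\|+\sum_{j=1}^{l-1}\Big\|D'^{(l)}W^{(l)}\prod_{i=j+1}^{l-1}D^{(i)}W^{(i)}\Big\|\,m^{(j)},$$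 where $\prod_{i=a}^{b}D^{(i)}W^{(i)}=D^{(b)}W^{(b)}\cdots D^{(a)}W^{(a)}$ and the empty product is the identity. Then for each $l=1,\dots,L$, $m^{(l)}$ is a Lipschitz constant (in $\ell_p$) of the map $x\mapsto y^{(l)}(x)$. In particular, $m^{(L)}$ is a Lipschitz constant of $x\mapsto f(x)$.
   Context: A function $\sigma:\mathbb{R}\to\mathbb{R}$ is slope-restricted in $[\alpha,\beta]$ if $\alpha\le\frac{\sigma(x)-\sigma(y)}{x-y}\le\beta$ for all $x\ne y$. A Lipschitz constant $m$ of $g$ in $\ell_p$ means $\|g(x)-g(x')\|_p\le m\|x-x'\|_p$ for all $x,x'$. *)

(* Defs.v *)
From mathcomp Require Import all_boot all_order all_algebra.
From mathcomp Require Import all_classical all_reals all_analysis.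
Set Implicit Arguments. Unset Strict Implicit. Unset Printing Implicit Defensive.
Import Order.TTheory GRing.Theory Num.Theory.
Local Open Scope ring_scope.
Local Open Scope classical_set_scope.

Section Defs.
Variable R : realType.

Definition lpnorm (p : \bar R) (k : nat) (v : 'cV[R]_k) : R :=
  match p with
  | +oo%E => \big[Num.max/0]_(i < k) `|v i 0|
  | EFin r => (\sum_(i < k) `|v i 0| `^ r) `^ (r^-1)
  | -oo%E => 0
  end.

Definition opnorm (p : \bar R) (a b : nat) (A : 'M[R]_(a, b)) : R :=
  sup [set lpnorm p (A *m v) | v in [set v : 'cV[R]_b | lpnorm p v <= 1]].

Definition slope_restricted (s : R -> R) (al be : R) : Prop :=
  forall x y : R, x != y -> al <= (s x - s y) / (x - y) <= be.

Variables (n : nat -> nat) (W : forall l, 'M[R]_(n l, n l.-1))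
          (sigma : forall l, 'I_(n l) -> R -> R).

Definition act (l : nat) (v : 'cV[R]_(n l)) : 'cV[R]_(n l) :=
  \col_i sigma i (v i 0).

Fixpoint acts (x : 'cV[R]_(n 0)) (l : nat) : 'cV[R]_(n l) :=
  match l with
  | 0 => x
  | l'.+1 => act (W l'.+1 *m acts x l')
  end.

(* z^{(l)}(x) = W^{(l)} a^{(l-1)}(x) for l >= 1 (z 0 is unused) *)
Definition preact (x : 'cV[R]_(n 0)) (l : nat) : 'cV[R]_(n l) :=
  match l with
  | 0 => x
  | l'.+1 => W l'.+1 *m acts x l'
  end.

Variables (d : forall l, 'I_(n l) -> R) (beta : forall l, 'I_(n l) -> R) (L : nat).

Definition Dmat (l : nat) : 'M[R]_(n l) := diag_mx (\row_i d i).

Definition Dpmat (l : nat) : 'M[R]_(n l) :=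
  if l == L then 1%:M else diag_mx (\row_i (beta i - d i)).

(* prodDW j k = D^{(k+j)} W^{(k+j)} ... D^{(j+1)} W^{(j+1)}  (identity if k = 0) *)
Fixpoint prodDW (j k : nat) : 'M[R]_(n (k + j), n j) :=
  match k with
  | 0 => 1%:M
  | k'.+1 => Dmat (k'.+1 + j) *m W (k'.+1 + j) *m prodDW j k'
  end.

(* Tmat j k = D'^{(l)} W^{(l)} prod_{i=j+1}^{l-1} D^{(i)} W^{(i)}  with l = k+1+j *)
Definition Tmat (j k : nat) : 'M[R]_(n (k.+1 + j), n j) :=
  Dpmat (k.+1 + j) *m W (k.+1 + j) *m prodDW j k.

Definition yout (x : 'cV[R]_(n 0)) (l : nat) : 'cV[R]_(n l) :=
  Dpmat l *m preact x l.

End Defs.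

(* Main.v *)
Require Import Defs.
From mathcomp Require Import all_boot all_order all_algebra.
From mathcomp Require Import all_classical all_reals all_analysis.
From mathcomp Require Import ring lra zify.
Import Order.TTheory GRing.Theory Num.Theory.
Local Open Scope ring_scope.
Set Printing Width 200.
Set Implicit Arguments. Unset Strict Implicit. Unset Printing Implicit Defensive.

Section Norms.
Variable R : realType.

Definition ext k (v : 'cV[R]_k) : nat -> R :=
  fun i => if @insub _ (fun i => i < k)%N 'I_k i is Some j then v j 0 else 0.

Lemma lp_counting (r : R) k (v : 'cV[R]_k) : 0 < r ->
  'N[counting]_(r%:E)[EFin \o ext v]%E = (lpnorm r%:E v)%:E.
Proof.
move=> r0; rewrite Lnorm_counting //.
rewrite (nneseries_split 0 k); last by move=> i _; rewrite poweR_ge0.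
rewrite add0n eseries0 ?adde0; last first.
  move=> i ki _ /=; rewrite /ext insubF ?ltnNge ?ki //=.

  by rewrite normr0 powR0 ?gt_eqF.
rewrite big_mkord.
under eq_bigr => i _ do rewrite /= /ext valK /=.

by rewrite sumEFin poweR_EFin.
Qed.


Lemma ext_add k (u v : 'cV[R]_k) : ext (u + v) = (ext u \+ ext v)%R.
Proof.
apply/funext => i; rewrite /ext /=; case: insub => [j|]; last by rewrite addr0.
by rewrite mxE.
Qed.

Lemma lp_triangle_fin (r : R) k (u v : 'cV[R]_k) : 1 <= r ->
  lpnorm r%:E (u + v) <= lpnorm r%:E u + lpnorm r%:E v.
Proof.
move=> r1; have r0 : 0 < r by rewrite (lt_le_trans _ r1).
have mf (w : 'cV[R]_k) : measurable_fun setT (ext w) by [].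
have := eminkowski counting (mf u) (mf v) (p := r%:E) r1.
by rewrite -ext_add !lp_counting // -EFinD lee_fin.
Qed.


Lemma powRK' (r x : R) : 0 < r -> 0 <= x -> (x `^ r) `^ r^-1 = x.
Proof. by move=> r0 x0; rewrite -powRrM mulfV ?gt_eqF // powRr1. Qed.

Lemma lp_ge0 (p : \bar R) k (v : 'cV[R]_k) : 0 <= lpnorm p v.
Proof.
case: p => [r||] //=; first exact: powR_ge0.
by elim/big_ind: _ => // x y ? ?; rewrite le_max; apply/orP; left.
Qed.

Lemma lp_coord (p : \bar R) k (v : 'cV[R]_k) i : (1 <= p)%E -> `|v i 0| <= lpnorm p v.
Proof.
case: p => [r||] //=; last by move=> _; exact: (le_bigmax _ (fun i => `|v i 0|)).
rewrite lee_fin => r1; have r0 : 0 < r by rewrite (lt_le_trans _ r1).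
rewrite -{1}(powRK' r0 (normr_ge0 (v i 0))).
apply: (@ge0_ler_powR _ r^-1).
- by rewrite invr_ge0 ltW.
- by rewrite nnegrE powR_ge0.
- by rewrite nnegrE sumr_ge0 // => j _; rewrite powR_ge0.
rewrite /= (bigD1 i) //= lerDl sumr_ge0 // => j _; exact: powR_ge0.
Qed.

Lemma lp_mono (p : \bar R) k (u v : 'cV[R]_k) : (1 <= p)%E ->
  (forall i, `|u i 0| <= `|v i 0|) -> lpnorm p u <= lpnorm p v.
Proof.
case: p => [r||] //=; last first.
  move=> _ h; apply: bigmax_le; first exact: (lp_ge0 +oo%E v).
  by move=> i _; apply: (le_trans (h i)); exact: (le_bigmax _ (fun i => `|v i 0|)).
rewrite lee_fin => r1 h; have r0 : 0 < r by rewrite (lt_le_trans _ r1).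
apply: (@ge0_ler_powR _ r^-1).
- by rewrite invr_ge0 ltW.
- by rewrite nnegrE sumr_ge0 // => j _; rewrite powR_ge0.
- by rewrite nnegrE sumr_ge0 // => j _; rewrite powR_ge0.
apply: ler_sum => i _; apply: (@ge0_ler_powR _ r) => //; first exact: ltW.
Qed.

Lemma lp_scale (p : \bar R) k c (v : 'cV[R]_k) : (1 <= p)%E ->
  lpnorm p (c *: v) <= `|c| * lpnorm p v.
Proof.
case: p => [r||] //=; last first.
  move=> _; apply: bigmax_le; first by rewrite mulr_ge0 // (lp_ge0 +oo%E v).
  move=> i _; rewrite mxE normrM ler_wpM2l //.
  exact: (le_bigmax _ (fun i => `|v i 0|)).
rewrite lee_fin => r1; have r0 : 0 < r by rewrite (lt_le_trans _ r1).
under eq_bigr => i _ do rewrite mxE normrM powRM //.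
rewrite -mulr_sumr powRM ?powRK' ?powR_ge0 ?sumr_ge0 //.
Qed.

Lemma lp_triangle (p : \bar R) k (u v : 'cV[R]_k) : (1 <= p)%E ->
  lpnorm p (u + v) <= lpnorm p u + lpnorm p v.
Proof.
case: p => [r||] //; first by rewrite lee_fin; exact: lp_triangle_fin.
move=> _ /=; apply: bigmax_le; first by rewrite addr_ge0 // (lp_ge0 +oo%E).
move=> i _; rewrite mxE (le_trans (ler_normD _ _)) // lerD //;
  exact: (le_bigmax _ (fun i => `|_ i 0|)).
Qed.

Lemma lp0 (p : \bar R) k : (1 <= p)%E -> lpnorm p (0 : 'cV[R]_k) = 0.
Proof.
move=> p1; apply/eqP; rewrite eq_le lp_ge0 andbT.
by rewrite -(scale0r (0 : 'cV[R]_k)) (le_trans (lp_scale _ _ p1)) // normr0 mul0r.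
Qed.



Lemma opnorm_has_sup (p : \bar R) a b (A : 'M[R]_(a, b)) : (1 <= p)%E ->
  has_sup [set lpnorm p (A *m v) | v in [set v : 'cV[R]_b | lpnorm p v <= 1]].
Proof.
move=> p1; split.
  by exists (lpnorm p (A *m 0)), 0 => //=; rewrite lp0.
exists (lpnorm p (\col_k (\sum_i `|A k i|) : 'cV[R]_a)).
move=> _ [v /= v1 <-]; apply: lp_mono => // k.
rewrite !mxE [X in _ <= X]ger0_norm; last by apply: sumr_ge0 => i _; exact: normr_ge0.
apply: (le_trans (ler_norm_sum _ _ _)).
apply: ler_sum => i _; rewrite normrM -{2}(mulr1 `|A k i|) ler_wpM2l //.
exact: le_trans (lp_coord _ _ p1) v1.
Qed.

Lemma opnorm_ge0 (p : \bar R) a b (A : 'M[R]_(a, b)) : (1 <= p)%E -> 0 <= opnorm p A.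
Proof.
move=> p1; apply: sup_upper_bound; first exact: opnorm_has_sup.
by exists 0 => //=; rewrite ?lp0 ?mulmx0 ?lp0 // ler01.
Qed.

Lemma opnorm_bound (p : \bar R) a b (A : 'M[R]_(a, b)) (v : 'cV[R]_b) : (1 <= p)%E ->
  lpnorm p (A *m v) <= opnorm p A * lpnorm p v.
Proof.
move=> p1; have [c0|c0] := eqVneq (lpnorm p v) 0.
  have -> : v = 0.
    apply/matrixP => i j; rewrite ord1 mxE; apply/normr0_eq0/eqP.
    by rewrite eq_le normr_ge0 andbT -c0 lp_coord.
  by rewrite mulmx0 !lp0 // mulr0.
have cpos : 0 < lpnorm p v by rewrite lt_neqAle eq_sym c0 /= lp_ge0.
have u1 : lpnorm p ((lpnorm p v)^-1 *: v) <= 1.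
  rewrite (le_trans (lp_scale _ _ p1)) //.
  by rewrite ger0_norm ?invr_ge0 ?(ltW cpos) // mulVf.
have e : A *m v = lpnorm p v *: (A *m ((lpnorm p v)^-1 *: v)).
  by rewrite scalemxAr scalerA mulfV // scale1r.
rewrite {1}e (le_trans (lp_scale _ _ p1)) // ger0_norm ?(ltW cpos) // mulrC.
rewrite ler_wpM2r ?(ltW cpos) //.
apply: sup_upper_bound; first exact: opnorm_has_sup.
by exists ((lpnorm p v)^-1 *: v).
Qed.

End Norms.

Lemma lp_sum (R : realType) (p : \bar R) k (I : Type) (r : seq I) (P : pred I) (F : I -> 'cV[R]_k) :
  (1 <= p)%E -> lpnorm p (\sum_(i <- r | P i) F i) <= \sum_(i <- r | P i) lpnorm p (F i).
Proof.
move=> p1; elim/big_rec2: _ => [|i y1 y2 _ h]; first by rewrite lp0.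
by apply: (le_trans (lp_triangle _ _ p1)); rewrite lerD2l.
Qed.

Lemma slope_bound (R : realType) (s : R -> R) (al be dd a b : R) :
  slope_restricted s al be -> al <= be -> 0 <= dd <= (al + be) / 2 ->
  `|(s a - dd * a) - (s b - dd * b)| <= `|(be - dd) * a - (be - dd) * b|.
Proof.
move=> sr ab /andP[d0 d1]; have [->|ne] := eqVneq a b; first by rewrite !subrr normr0.
have /andP[q1 q2] := sr a b ne.
set q := (s a - s b) / (a - b) in q1 q2.
have hab : a - b != 0 by rewrite subr_eq0.
have e : s a - s b = q * (a - b) by rewrite /q divfK.
have -> : (s a - dd * a) - (s b - dd * b) = (q - dd) * (a - b).
  by rewrite mulrBl -e; ring.
rewrite -mulrBr !normrM ler_wpM2r // [X in _ <= X]ger0_norm; last by lra.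
rewrite ler_norml; apply/andP; split; lra.
Qed.

Unset Implicit Arguments.
Section Net.
Variables (R : realType) (n : nat -> nat) (W : forall l, 'M[R]_(n l, n l.-1))
  (sigma : forall l, 'I_(n l) -> R -> R) (d beta : forall l, 'I_(n l) -> R) (L : nat).

Definition rr (x : 'cV[R]_(n 0)) (j : nat) : 'cV[R]_(n j) :=
  match j as j0 return 'cV[R]_(n j0) with
  | 0 => x
  | j'.+1 => acts W sigma x j'.+1 - Dmat d j'.+1 *m preact W sigma x j'.+1
  end.

Definition Q (i j : nat) : 'M[R]_(n i, n j) := conform_mx 0 (prodDW W d j (i - j)).

Lemma QE k j : Q (k + j) j = prodDW W d j k.
Proof. by rewrite /Q addnK conform_mx_id. Qed.

Lemma Qdiag i : Q i i = 1%:M.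
Proof. exact: (QE 0 i). Qed.

Lemma QstepK k j : Q (k + j).+1 j = Dmat d (k + j).+1 *m W (k + j).+1 *m Q (k + j) j.
Proof. rewrite [Q (k + j) j]QE; exact: (QE k.+1 j). Qed.

Lemma Qstep i j : (j <= i)%N -> Q i.+1 j = Dmat d i.+1 *m W i.+1 *m Q i j.
Proof.
move=> h; have [k ->] : exists k, i = (k + j)%N by exists (i - j)%N; rewrite subnK.
exact: QstepK.
Qed.

Lemma acts_sum x i : acts W sigma x i = \sum_(j < i.+1) Q i j *m rr x j.
Proof.
elim: i => [|i IH]; first by rewrite big_ord1 /= Qdiag mul1mx.
rewrite big_ord_recr /= Qdiag mul1mx.
rewrite (eq_bigr (fun j : 'I_i.+1 => Dmat d i.+1 *m W i.+1 *m (Q i j *m rr x j))); last first.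
  by move=> j _; rewrite /= Qstep ?mulmxA // -ltnS.
rewrite -mulmx_sumr -IH.
by rewrite -mulmxA addrC subrK.
Qed.


Lemma acts_diff x x' i : acts W sigma x i - acts W sigma x' i =
  \sum_(j < i.+1) Q i j *m (rr x j - rr x' j).
Proof.
by rewrite !acts_sum -sumrB; apply: eq_bigr => j _; rewrite mulmxBr.
Qed.

Lemma yout_diff x x' l : yout W sigma d beta L x l.+1 - yout W sigma d beta L x' l.+1 =
  \sum_(j < l.+1) (Dpmat d beta L l.+1 *m W l.+1 *m Q l j) *m (rr x j - rr x' j).
Proof.
rewrite /yout /= -!mulmxBr acts_diff !mulmx_sumr; apply: eq_bigr => j _.
by rewrite !mulmxA.
Qed.

Lemma Tmat_eq p l j : (j <= l)%N ->
  opnorm p (Dpmat d beta L l.+1 *m W l.+1 *m Q l j) = opnorm p (Tmat W d beta L j (l.+1 - j).-1).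
Proof.
move=> h; have [k ->] : exists k, l = (k + j)%N by exists (l - j)%N; rewrite subnK.
rewrite subSn ?leq_addl // addnK /=.
by rewrite QE.
Qed.


Lemma rr_bound (p : \bar R) (alpha : forall l, 'I_(n l) -> R) (x x' : 'cV[R]_(n 0)) j : (1 <= p)%E ->
  (forall l (i : 'I_(n l)), (1 <= l <= L.-1)%N ->
     [/\ 0 <= alpha l i, alpha l i <= beta l i &
         slope_restricted (sigma l i) (alpha l i) (beta l i)]) ->
  (forall l (i : 'I_(n l)), (1 <= l <= L.-1)%N ->
     0 <= d l i <= (alpha l i + beta l i) / 2) ->
  (1 <= j <= L.-1)%N ->
  lpnorm p (rr x j - rr x' j) <= lpnorm p (yout W sigma d beta L x j - yout W sigma d beta L x' j).
Proof.
move=> p1 ha hd hj; case: j hj => [//|j] hj.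
apply: lp_mono => // i.
have jL : (j.+1 == L) = false.
  by apply/eqP => e; move: hj; rewrite e => /andP[h1 h2]; lia.
have [a0 ab sr] := ha _ i hj.
rewrite /yout /Dpmat jL /= /Dmat /act !mul_diag_mx !mxE.
exact: slope_bound sr ab (hd _ i hj).
Qed.

End Net.

Theorem theorem2 (R : realType) (p : \bar R) (L : nat) (n : nat -> nat)
  (W : forall l, 'M[R]_(n l, n l.-1))
  (sigma : forall l, 'I_(n l) -> R -> R)
  (alpha beta d : forall l, 'I_(n l) -> R)
  (m : nat -> R) :
  (1 <= p)%E ->
  (1 <= L)%N ->
  (forall l (i : 'I_(n l)), (1 <= l <= L.-1)%N ->
     [/\ 0 <= alpha l i, alpha l i <= beta l i &
         slope_restricted (sigma l i) (alpha l i) (beta l i)]) ->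
  (forall l (i : 'I_(n l)), (1 <= l <= L.-1)%N ->
     0 <= d l i <= (alpha l i + beta l i) / 2) ->
  (forall l, (1 <= l <= L)%N ->
     m l = opnorm p (Tmat W d beta L 0 l.-1)
           + \sum_(1 <= j < l) opnorm p (Tmat W d beta L j (l - j).-1) * m j) ->
  forall l, (1 <= l <= L)%N ->
  forall x x' : 'cV[R]_(n 0),
    lpnorm p (yout W sigma d beta L x l - yout W sigma d beta L x' l)
      <= m l * lpnorm p (x - x').
Proof.
move=> p1 L1 ha hd hm l hl x x'.
elim/ltn_ind: l hl => l IH /andP[l1 lL].
case: l IH l1 lL => [//|l] IH _ lL.
rewrite yout_diff.
apply: (le_trans (lp_sum _ _ _ p1)).
apply: (le_trans (ler_sum _ (fun j _ => opnorm_bound _ _ p1))).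
rewrite big_ord_recl hm ?lL // mulrDl.
rewrite Tmat_eq //.
apply: lerD; first exact: lexx.
rewrite mulr_suml big_add1 big_mkord.
apply: ler_sum => j _.
rewrite lift0 Tmat_eq // -mulrA ler_wpM2l ?opnorm_ge0 //.
have hj : (1 <= j.+1 <= L.-1)%N by move: lL (ltn_ord j); lia.
apply: (le_trans (rr_bound _ _ _ _ _ _ _ p _ x x' _ p1 ha hd hj)).
apply: IH => //; move: lL (ltn_ord j); lia.
Qed.
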